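(* For every integer $k\ge6$ and every real $r>1$ there is a constant $c>0$ such that for every even integer $n\ge2$ there exists a unit disk graph $G=(V,E)$ with $|V|=n$ such that each of the Yao-Yao graph $YY_k$, the Yao-Sink graph $YS_k$, and the Yao-Sparse-Sink graph $YES_k$ (with parameter $r$) of $G$ has weight at least $c\,n\cdot wt(MST(V))$.
   Context: Unit disk graph: $V$ a finite point set in the plane, $E=\{uv:|uv|\le1\}$ with $|uv|$ Euclidean distance. $wt(H)$ is the sum of Euclidean lengths of the edges of $H$ (viewed as an undirected graph); $MST(V)$ is a Euclidean minimum spanning tree of $V$. Cones: with $\theta=2\pi/k$, at each point $x$ the plane is partitioned into $k$ half-open half-closed cones with apex $x$ of angle $\theta$, bounded by $k$ equally spaced rays (same directions at every node). Identifiers: nodes have distinct IDs; $\mathrm{ID}(\overrightarrow{xy})=(|xy|,\mathrm{ID}(x),\mathrm{ID}(y))$ compared lexicographically; $\mathrm{ID}(xy)=\min\{\mathrm{ID}(\overrightarrow{xy}),\mathrm{ID}(\overrightarrow{yx})\}$. Yao step: for each node $x$ and each cone $K_x$ containing the other endpoint of some edge of $E$ incident to $x$, add to $E_Y$ the directed edge $\overrightarrow{xy}$ where $xy$ is such an edge with lowest $\mathrm{ID}(xy)$. Reverse Yao step: from $E_{YY}=E_Y$, for each node $v$ and each cone $K_v$, among edges $\overrightarrow{xv}\in E_Y$ with $x\in K_v$ keep only the one of smallest ID; $YY_k=(V,E_{YY})$. Sink step on a directed edge set $D$: for each node $v$ and cone $K_v$: let $I$ be the set of $x$ with $\overrightarrow{xv}\in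 D$, $x\in K_v$; set $I(v)\leftarrow I$, $J\leftarrow(v)$, $T(v)\leftarrow\emptyset$; repeat until $I$ is empty: remove the first vertex $x$ of $J$; for each cone $K_x$, let $w\in I(x)\cap K_x$ minimize $\mathrm{ID}(\overrightarrow{wx})$ (if any), add $\overrightarrow{wx}$ to $T(v)$, move $w$ from $I$ to $J$, set $I(w)\leftarrow I(x)\cap K_x$; output the union of all $T(v)$. $YS_k$ is the Sink step applied to $E_Y$. Filtering step (parameter $r>1$): for each node $v$ and cone $K_v$, let $F$ be the set of $\overrightarrow{xv}\in E_Y$ with $x\in K_v$; if nonempty let $\overrightarrow{uv}$ be its minimum-ID edge, let $F_i=\{\overrightarrow{ab}\in F:|uv|r^{i-1}\le|ab|<|uv|r^i\}$ for $i\ge1$, and put into $E_{YE}$ the smallest-ID edge of each nonempty $F_i$. $YES_k$ is the Sink step applied to $E_{YE}$. All outputs are viewed as undirected graphs. *)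

(* Defs.v *)
From HB Require Import structures.
From mathcomp Require Import all_boot all_order all_algebra.
From mathcomp Require Import all_classical all_reals all_analysis.
Set Implicit Arguments. Unset Strict Implicit. Unset Printing Implicit Defensive.
Import Order.TTheory GRing.Theory Num.Theory.
Local Open Scope ring_scope.

Section UDG.
Variable R : realType.
Variable k : nat.
Variable n : nat.          (* number of nodes; node x : 'I_n has ID = val x *)
Variable p : 'I_n -> R * R.

Definition dist (a b : R * R) : R := Num.sqrt ((a.1 - b.1) ^+ 2 + (a.2 - b.2) ^+ 2).
Definition d (x y : 'I_n) : R := dist (p x) (p y).

Definition theta : R := 2 * pi / k%:R.

Definition inCone (x : 'I_n) (j : nat) (y : 'I_n) : Prop :=
  (j < k)%N /\
  exists rho alpha : R, 0 < rho /\ j%:R * theta <= alpha < j.+1%:R * theta /\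
    (p y).1 - (p x).1 = rho * cos alpha /\ (p y).2 - (p x).2 = rho * sin alpha.

Definition udgE (x y : 'I_n) : Prop := x <> y /\ d x y <= 1.

Definition lexlt (a b : R * nat * nat) : bool :=
  (a.1.1 < b.1.1) || ((a.1.1 == b.1.1) &&
     ((a.1.2 < b.1.2)%N || ((a.1.2 == b.1.2) && (a.2 < b.2)%N))).
Definition lexle (a b : R * nat * nat) : bool := (a == b) || lexlt a b.
(* ID of the directed edge x -> y *)
Definition keyD (x y : 'I_n) : R * nat * nat := (d x y, nat_of_ord x, nat_of_ord y).
Definition keyU (x y : 'I_n) : R * nat * nat :=
  if lexle (keyD x y) (keyD y x) then keyD x y else keyD y x.

Definition EY (x y : 'I_n) : Prop :=
  udgE x y /\ exists j, inCone x j y /\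
    forall z, udgE x z -> inCone x j z -> lexle (keyU x y) (keyU x z).

Definition EYY (x v : 'I_n) : Prop :=
  EY x v /\ exists j, inCone v j x /\
    forall w, EY w v -> inCone v j w -> lexle (keyU x v) (keyU w v).

(* Sink step.  sinkT S x a b : the directed edge a -> b is produced when node x
   is processed with I(x) = S: for each cone K_x, the w in S /\ K_x of minimal
   ID(w -> x) gives the edge w -> x and is processed with I(w) = S /\ K_x. *)
Inductive sinkT : ('I_n -> Prop) -> 'I_n -> 'I_n -> 'I_n -> Prop :=
| SinkHere (S : 'I_n -> Prop) (x : 'I_n) (j : nat) (w : 'I_n) :
    S w -> inCone x j w ->
    (forall w', S w' -> inCone x j w' -> lexle (keyD w x) (keyD w' x)) ->
    sinkT S x w x
| SinkDeep (S : 'I_n -> Prop) (x : 'I_n) (j : nat) (w a b : 'I_n) :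
    S w -> inCone x j w ->
    (forall w', S w' -> inCone x j w' -> lexle (keyD w x) (keyD w' x)) ->
    sinkT (fun z => S z /\ inCone x j z) w a b ->
    sinkT S x a b.

Definition SinkStep (D : 'I_n -> 'I_n -> Prop) (a b : 'I_n) : Prop :=
  exists v j, sinkT (fun x => D x v /\ inCone v j x) v a b.

Variable r : R.
Definition inF (v : 'I_n) (j : nat) (a : 'I_n) : Prop := EY a v /\ inCone v j a.
Definition band (u v : 'I_n) (i : nat) (a : 'I_n) : Prop :=
  d u v * r ^+ i.-1 <= d a v < d u v * r ^+ i.
Definition EYE (x v : 'I_n) : Prop :=
  exists (j : nat) (u : 'I_n) (i : nat),
    inF v j x /\ inF v j u /\
    (forall u', inF v j u' -> lexle (keyD u v) (keyD u' v)) /\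
    (1 <= i)%N /\ band u v i x /\
    (forall y, inF v j y -> band u v i y -> lexle (keyD x v) (keyD y v)).

Definition undirRel (H : 'I_n -> 'I_n -> Prop) : rel 'I_n :=
  fun a b => `[< H a b \/ H b a >].
Definition wt (H : 'I_n -> 'I_n -> Prop) : R :=
  \sum_(a : 'I_n) \sum_(b : 'I_n | (a < b)%N && undirRel H a b) d a b.

Definition spanningTree (T : 'I_n -> 'I_n -> Prop) : Prop :=
  (forall a b, connect (undirRel T) a b) /\
  #|[set ab : 'I_n * 'I_n | (ab.1 < ab.2)%N && undirRel T ab.1 ab.2]| = n.-1.

Definition isMST (T : 'I_n -> 'I_n -> Prop) : Prop :=
  spanningTree T /\ forall T', spanningTree T' -> wt T <= wt T'.

End UDG.

(* Main.v *)
Require Import Defs.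
From HB Require Import structures.
From mathcomp Require Import all_boot all_order all_algebra.
From mathcomp Require Import all_classical all_reals all_analysis.
From mathcomp Require Import zify ring lra.
Import Order.TTheory GRing.Theory Num.Theory.
Local Open Scope ring_scope.

Section Lex.
Variable R : realType.
Implicit Types a b c : R * nat * nat.

Lemma lexle_refl a : lexle a a.
Proof. by rewrite /lexle eqxx. Qed.

Lemma lexle_total a b : lexle a b || lexle b a.
Proof.
case: a => [[x i] j]; case: b => [[y i'] j']; rewrite /lexle /lexlt /=.
case: (ltgtP x y) => //= Hxy; first by rewrite orbT.
  by rewrite !orbT.
subst y; rewrite !xpair_eqE !eqxx /=.
case: (ltngtP i i') => //= Hi.
by case: (ltngtP j j') => //= Hj; rewrite ?orbT ?Hj ?eqxx.
Qed.

Lemma lexle_trans a b c : lexle a b -> lexle b c -> lexle a c.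
Proof.
case: a => [[x i] j]; case: b => [[y i'] j']; case: c => [[z i''] j''].
rewrite /lexle /lexlt /= !xpair_eqE.
case/orP=> [/andP[/andP[/eqP-> /eqP->] /eqP->] //|H1].
case/orP=> [/andP[/andP[/eqP<- /eqP<-] /eqP<-]|H2]; first by rewrite H1 orbT.
apply/orP; right.
case/orP: H1 => [H1|/andP[/eqP e1 H1]]; case/orP: H2 => [H2|/andP[/eqP e2 H2]].
- by rewrite (lt_trans H1 H2).
- by rewrite -e2 H1.
- by rewrite e1 H2.
- subst y z; rewrite eqxx /= ltxx /=.
  case/orP: H1 => [H1|/andP[/eqP e1 H1]]; case/orP: H2 => [H2|/andP[/eqP e2 H2]].
  + by rewrite (ltn_trans H1 H2).
  + by rewrite -e2 H1.
  + by rewrite e1 H2.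
  + by subst; rewrite eqxx (ltn_trans H1 H2) orbT.
Qed.

Lemma lexle_fst a b : a.1.1 < b.1.1 -> lexle a b.
Proof. by move=> H; rewrite /lexle /lexlt H orbT. Qed.

End Lex.

Lemma seq_min (T : eqType) (le : T -> T -> bool) (s : seq T) :
  (forall a, le a a) -> (forall a b, le a b || le b a) ->
  (forall a b c, le a b -> le b c -> le a c) ->
  s != [::] -> exists2 w, w \in s & forall w', w' \in s -> le w w'.
Proof.
move=> Hr Ht Htr; elim: s => [//|x s IH] _.
case: (eqVneq s [::]) => [->|ne].
  by exists x; rewrite ?mem_head // => w'; rewrite inE => /eqP->.
case: (IH ne) => w ws Hw.
case/orP: (Ht x w) => H.
- exists x; first exact: mem_head.
  move=> w'; rewrite inE => /orP[/eqP->//|]; move/Hw; exact: Htr.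
- exists w; first by rewrite inE ws orbT.
  by move=> w'; rewrite inE => /orP[/eqP->//|]; exact: Hw.
Qed.

Lemma fin_min (R : realType) (T : finType) (P : T -> Prop) (f : T -> R * nat * nat) :
  (exists x, P x) -> exists w, P w /\ forall w', P w' -> lexle (f w) (f w').
Proof.
move=> [x Px].
have ne : [seq y <- enum T | `[< P y >]] != [::].
  apply/eqP => E. have : x \in [seq y <- enum T | `[< P y >]].
    by rewrite mem_filter mem_enum andbT; apply/asboolP.
  by rewrite E.
have := @seq_min _ (fun a b => lexle (f a) (f b)) _ (fun a => @lexle_refl R (f a))
  (fun a b => @lexle_total R (f a) (f b)) (fun a b c => @lexle_trans R (f a) (f b) (f c)) ne.
case=> w; rewrite mem_filter => /andP[/asboolP Pw _] H.
exists w; split => // w' Pw'; apply: H.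
by rewrite mem_filter mem_enum andbT; apply/asboolP.
Qed.

Section Geo.
Variable R : realType.
Variable k : nat.
Hypothesis k6 : (6 <= k)%N.
Definition qq := (k %/ 2)%N.
Definition j1 := qq.-1.
Definition j2 := (j1 + qq)%N.
Definition th : R := theta R k.
Definition beta : R := j1%:R * th.

Lemma q3 : (3 <= qq)%N. Proof. rewrite /qq; lia. Qed.

Lemma thF : 0 < th /\ qq%:R * th <= pi /\ pi < (qq%:R + 1) * th /\ 3 <= qq%:R :> R.
Proof.
have hk : (2*qq <= k)%N by rewrite /qq; lia.
have hk2 : (k < 2*qq + 2)%N by rewrite /qq; lia.
have hq := q3.
have hk' : 2 * qq%:R <= k%:R :> R by rewrite -(ler_nat R) natrM in hk.
have hk2' : k%:R < 2 * qq%:R + 2 :> R.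
  by rewrite -(ltr_nat R) natrD natrM in hk2.
have hq' : 3 <= qq%:R :> R by rewrite (ler_nat R 3).
have kpos : 0 < k%:R :> R by rewrite ltr0n; lia.
have pipos := @pi_gt0 R.
have E : th * k%:R = 2 * pi.
  rewrite /th /theta; field; lra.
have thpos : 0 < th.
  rewrite /th /theta; apply: divr_gt0; lra.
split => //; split; first nra.
by split; [nra|].
Qed.

Lemma j1R : j1%:R = qq%:R - 1 :> R.
Proof. have := q3; rewrite /j1 => h.
have e : qq = (qq.-1).+1 by lia.
by rewrite [in RHS]e -natr1 addrK. Qed.
Lemma j1SR : j1.+1%:R = qq%:R :> R.
Proof. have := q3; rewrite /j1 => h. by rewrite prednK //; lia. Qed.
Lemma j2R : j2%:R = 2 * qq%:R - 1 :> R.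
Proof. by rewrite /j2 natrD j1R; ring. Qed.
Lemma j2SR : j2.+1%:R = 2 * qq%:R :> R.
Proof. by rewrite -natr1 j2R; ring. Qed.
Lemma j1k : (j1 < k)%N. Proof. rewrite /j1 /qq; lia. Qed.
Lemma j2k : (j2 < k)%N. Proof. rewrite /j2 /j1 /qq; lia. Qed.

Lemma sinbeta_gt0 : 0 < sin beta.
Proof.
have [h1 [h2 [h3 h4]]] := thF.
apply: sin_gt0_pi; rewrite /beta j1R; apply/andP; split; nra.
Qed.

Lemma cosbeta_le0 : cos beta <= 0.
Proof.
have [h1 [h2 [h3 h4]]] := thF.
have -> : beta = (beta - pi / 2) + pi / 2 by ring.
rewrite cosDpihalf oppr_le0; apply: sin_ge0_pi.
rewrite /beta j1R; apply/andP; split; nra.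
Qed.

Lemma cone1_sin a : j1%:R * th <= a < j1.+1%:R * th -> 0 < sin a.
Proof.
have [h1 [h2 [h3 h4]]] := thF.
rewrite j1R j1SR => /andP[l1 l2].
apply: sin_gt0_pi; apply/andP; split; nra.
Qed.

Lemma cone1_sinB a : j1%:R * th <= a < j1.+1%:R * th -> 0 <= sin (a - beta).
Proof.
have [h1 [h2 [h3 h4]]] := thF.
rewrite j1R j1SR => /andP[l1 l2].
apply: sin_ge0_pi; rewrite /beta j1R; apply/andP; split; nra.
Qed.

Lemma cone2_sin a : j2%:R * th <= a < j2.+1%:R * th -> sin a < 0.
Proof.
have [h1 [h2 [h3 h4]]] := thF.
rewrite j2R j2SR => /andP[l1 l2].
have -> : a = (a - pi) + pi by ring.
rewrite sinDpi oppr_lt0; apply: sin_gt0_pi; apply/andP; split; nra.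
Qed.

Lemma beta_cone2 : j2%:R * th <= beta + pi < j2.+1%:R * th.
Proof.
have [h1 [h2 [h3 h4]]] := thF.
rewrite j2R j2SR /beta j1R; apply/andP; split; nra.
Qed.


Lemma dist_sym (a b : R * R) : dist a b = dist b a.
Proof. by rewrite /dist -(sqrrN (a.1 - b.1)) opprB -(sqrrN (a.2 - b.2)) opprB. Qed.

Lemma keyU_fst n (p : 'I_n -> R * R) x y : (keyU p x y).1.1 = d p x y.
Proof. by rewrite /keyU; case: ifP => _ //=; rewrite /d dist_sym. Qed.

Lemma dist_ge0 (a b : R * R) : 0 <= dist a b.
Proof. exact: sqrtr_ge0. Qed.

Lemma dist_le (a b : R * R) : dist a b <= `|a.1 - b.1| + `|a.2 - b.2|.
Proof.
rewrite /dist; set x := a.1 - b.1; set y := a.2 - b.2.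
have h : 0 <= `|x| + `|y| by rewrite addr_ge0.
rewrite -(ger0_norm h) -sqrtr_sqr ler_sqrt ?sqr_ge0 //.
rewrite -(real_normK (num_real x)) -(real_normK (num_real y)).
have := normr_ge0 x; have := normr_ge0 y; nra.
Qed.

Lemma dist_ge2 (a b : R * R) : `|a.2 - b.2| <= dist a b.
Proof.
rewrite /dist -sqrtr_sqr ler_sqrt; last by rewrite addr_ge0 ?sqr_ge0.
by rewrite lerDr sqr_ge0.
Qed.

Variable n : nat.
Hypothesis nev : ~~ odd n.
Hypothesis n2 : (2 <= n)%N.
Definition mm := (n %/ 2)%N.
Lemma nmm : n = (mm + mm)%N.
Proof. have : (n %% 2 = 0)%N by rewrite modn2 (negbTE nev). rewrite /mm; lia. Qed.
Definition eps : R := n%:R^-1.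
Definition pos (x : 'I_n) : R * R :=
  if (x < mm)%N then (x%:R * eps, 0) else ((x - mm)%:R * eps + cos beta, sin beta).

Lemma posA {x : 'I_n} : (x < mm)%N -> pos x = (x%:R * eps, 0).
Proof. by move=> h; rewrite /pos h. Qed.
Lemma posB {x : 'I_n} : (mm <= x)%N -> pos x = ((x - mm)%:R * eps + cos beta, sin beta).
Proof. by move=> h; rewrite /pos ltnNge h. Qed.

Lemma eps_gt0 : 0 < eps.
Proof. by rewrite /eps invr_gt0 ltr0n; lia. Qed.

Lemma coneB (v y : 'I_n) : (mm <= v)%N -> inCone k pos v j2 y ->
  (y < mm)%N /\ sin beta <= d pos y v.
Proof.
move=> hv [_ [rho [al [rp [hal [e1 e2]]]]]].
rewrite (posB hv) /= in e1 e2.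
have sn := cone2_sin _ hal.
have sb := sinbeta_gt0.
case: (ltnP y mm) => hy.
- split => //.
  apply: le_trans (dist_ge2 _ _).
  by rewrite (posA hy) (posB hv) /= sub0r normrN ger0_norm // ltW.
- rewrite (posB hy) /= in e2. exfalso. nra.
Qed.


Lemma mm_gt0 : (0 < mm)%N.
Proof. have := nmm; lia. Qed.

Definition partner (v : 'I_n) : 'I_n :=
  Ordinal (leq_ltn_trans (leq_subr mm v) (ltn_ord v)).

Lemma partner_lt {v : 'I_n} : (mm <= v)%N -> (partner v < mm)%N.
Proof. move=> hv /=; have := nmm; have := ltn_ord v; lia. Qed.

Lemma coneA (v : 'I_n) : (mm <= v)%N -> inCone k pos v j2 (partner v).
Proof.
move=> hv; split; first exact j2k.
exists 1, (beta + pi); split; first exact: ltr01.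
split; first exact beta_cone2.
rewrite (posA (partner_lt hv)) (posB hv) /= cosDpi sinDpi; split; ring.
Qed.

Lemma EYA (v : 'I_n) : (mm <= v)%N -> EY k pos (partner v) v.
Proof.
move=> hv; have ha := partner_lt hv.
have [t1 [t2 [t3 t4]]] := thF.
have dav : d pos (partner v) v = 1.
  rewrite /d /dist (posA ha) (posB hv) /=.
  have -> : ((v - mm)%:R * eps - ((v - mm)%:R * eps + cos beta))^+2 + (0 - sin beta)^+2
     = cos beta ^+2 + sin beta ^+2 by ring.
  by rewrite cos2Dsin2 sqrtr1.
split.
  split; last by rewrite dav.
  move=> /(congr1 val) /=; have := mm_gt0; lia.
exists j1; split.
  split; first exact j1k.
  exists 1, beta; split; first exact: ltr01.
  split.
    rewrite /beta; apply/andP; split; first by [].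
    rewrite /th j1SR j1R; rewrite /th in t1; nra.
  rewrite (posA ha) (posB hv) /=; split; ring.
move=> z [zne dz] [_ [rho [al [rp [hal [e1 e2]]]]]].
rewrite (posA ha) /= in e1 e2.
have sa := cone1_sin _ hal. have sB := cone1_sinB _ hal.
have sb := sinbeta_gt0. have cb := cosbeta_le0. have ep := eps_gt0.
case: (ltnP z mm) => hz.
  rewrite (posA hz) /= subrr in e2; exfalso.
  by have := mulr_gt0 rp sa; rewrite -e2 ltxx.
rewrite (posB hz) /= in e1 e2.
set X := (z - mm)%:R * eps in e1 e2 *.
set Y := (v - mm)%:R * eps in e1 e2 *.
have dle : X - Y <= 0.
  have E1 : rho * cos al = X - Y + cos beta by rewrite -e1; ring.
  have E2 : rho * sin al = sin beta by rewrite -e2; ring.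
  rewrite sinB in sB.
  have E : rho * (sin al * cos beta - cos al * sin beta) = - (X - Y) * sin beta.
    have -> : rho * (sin al * cos beta - cos al * sin beta) =
       (rho * sin al) * cos beta - (rho * cos al) * sin beta by ring.
    rewrite E1 E2; ring.
  have := mulr_ge0 (ltW rp) sB; rewrite E => h.
  clear -h sb; nra.
have dz' : d pos (partner v) z =
   Num.sqrt ((Y - (X + cos beta))^+2 + (0 - sin beta)^+2).
  by rewrite /d /dist (posA ha) (posB hz).
set Q := (Y - (X + cos beta))^+2 + (0 - sin beta)^+2 in dz'.
have hQ : Q = (cos beta ^+ 2 + sin beta ^+ 2) + (X - Y)^+2 + 2 * (X - Y) * cos beta.
  rewrite /Q; ring.
rewrite cos2Dsin2 in hQ.
case: (ltrP 1 Q) => hq.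
  apply: lexle_fst; rewrite !keyU_fst dav dz' -sqrtr1 ltr_sqrt //; lra.
have XY : X = Y.
  have h0 := mulr_le0 dle cb.
  have h1 : (X - Y)^+2 = 0.
    apply/le_anti; rewrite sqr_ge0 andbT; clear -h0 hQ hq; lra.
  by move/eqP: h1; rewrite sqrf_eq0 subr_eq0 => /eqP.
have : (z - mm)%N = (v - mm)%N.
  apply/eqP; rewrite -(eqr_nat R); apply/eqP.
  by apply: (mulIf (lt0r_neq0 ep)).
move=> e; have -> : z = v by apply: val_inj => /=; rewrite -(subnK hz) -(subnK hv) e.
exact: lexle_refl.
Qed.


Lemma goodEYY (v : 'I_n) : (mm <= v)%N ->
  exists w : 'I_n, (w < v)%N /\ EYY k pos w v /\ sin beta <= d pos w v.
Proof.
move=> hv.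
have [w [[Hw Cw] Hmin]] := @fin_min R _ (fun x => EY k pos x v /\ inCone k pos v j2 x)
  (fun w => keyU pos w v) (ex_intro _ (partner v) (conj (EYA v hv) (coneA v hv))).
have [wl wd] := coneB v w hv Cw.
exists w; split; first by apply: leq_trans wl hv.
split => //; split => //; exists j2; split => // w' H1 H2; exact: Hmin.
Qed.

Lemma goodYS (v : 'I_n) : (mm <= v)%N ->
  exists w : 'I_n, (w < v)%N /\ SinkStep k pos (EY k pos) w v /\ sin beta <= d pos w v.
Proof.
move=> hv.
have [w [[Hw Cw] Hmin]] := @fin_min R _ (fun x => EY k pos x v /\ inCone k pos v j2 x)
  (fun w => keyD pos w v) (ex_intro _ (partner v) (conj (EYA v hv) (coneA v hv))).
have [wl wd] := coneB v w hv Cw.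
exists w; split; first by apply: leq_trans wl hv.
split => //; exists v, j2.
eapply SinkHere; [exact: (conj Hw Cw) | exact: Cw | ].
by move=> w' H1 H2; apply: Hmin.
Qed.

Lemma goodYES (r : R) (v : 'I_n) : 1 < r -> (mm <= v)%N ->
  exists w : 'I_n, (w < v)%N /\ SinkStep k pos (EYE k pos r) w v /\ sin beta <= d pos w v.
Proof.
move=> hr hv.
have [u [[Fu Cu] Hu]] := @fin_min R _ (fun x => EY k pos x v /\ inCone k pos v j2 x)
  (fun w => keyD pos w v) (ex_intro _ (partner v) (conj (EYA v hv) (coneA v hv))).
have [ul ud] := coneB v u hv Cu.
have sb := sinbeta_gt0.
have bu : band pos r u v 1 u.
  rewrite /band /= expr0 expr1 mulr1 lexx /=; nra.
have [x0 [[Fx Bx] Hx]] := @fin_min R _ (fun y => inF k pos v j2 y /\ band pos r u v 1 y)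
  (fun w => keyD pos w v) (ex_intro _ u (conj (conj Fu Cu) bu)).
have E0 : EYE k pos r x0 v.
  exists j2, u, 1%N; split => //; split => //.
  split; first by move=> u' H; apply: Hu.
  split => //; split => //.
  by move=> y H1 H2; apply: Hx.
have [w [[Hw Cw] Hmin]] := @fin_min R _ (fun x => EYE k pos r x v /\ inCone k pos v j2 x)
  (fun w => keyD pos w v) (ex_intro _ x0 (conj E0 Fx.2)).
have [wl wd] := coneB v w hv Cw.
exists w; split; first by apply: leq_trans wl hv.
split => //; exists v, j2.
eapply SinkHere; [exact: (conj Hw Cw) | exact: Cw | ].
by move=> w' H1 H2; apply: Hmin.
Qed.

Lemma wt_lb (H : 'I_n -> 'I_n -> Prop) :
  (forall v : 'I_n, (mm <= v)%N -> exists w : 'I_n, (w < v)%N /\ H w v /\ sin beta <= d pos w v) ->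
  mm%:R * sin beta <= wt pos H.
Proof.
move=> hyp.
rewrite /wt.
under eq_bigr do rewrite big_mkcond /=.
rewrite exchange_big /=.
apply: (@le_trans _ _ (\sum_(b : 'I_n) (if (mm <= b)%N then sin beta else 0))).
  rewrite -(big_mkord xpredT (fun i => if (mm <= i)%N then sin beta else 0)).
  have hmn : (mm <= n)%N by rewrite [in X in (_ <= X)%N]nmm leq_addr.
  rewrite (@big_cat_nat _ _ _ mm) //=.
  rewrite big_nat_cond big1 ?add0r; last first.
    by move=> i /andP[/andP[_ hi] _]; rewrite leqNgt hi.
  rewrite big_nat_cond (eq_bigr (fun _ => sin beta)); last first.
    by move=> i /andP[/andP[hi _] _]; rewrite hi.
  rewrite -big_nat_cond sumr_const_nat -mulr_natl.
  have -> : (n - mm = mm)%N by rewrite [in X in (X - _)%N]nmm addnK.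
  by rewrite mulr1 mulr_natl.
apply: ler_sum => b _.
case: ifP => hb; last first.
  by apply: sumr_ge0 => a _; case: ifP => _ //; exact: dist_ge0.
have [w [wl [Hw dw]]] := hyp b hb.
rewrite (bigD1 w) //= ifT; last first.
  by rewrite wl /=; apply/asboolP; left.
apply: le_trans dw _; rewrite lerDl.
by apply: sumr_ge0 => a _; case: ifP => _ //; exact: dist_ge0.
Qed.


Definition Tp (x y : 'I_n) : Prop := nat_of_ord y = (nat_of_ord x).+1.

Lemma Tp_conn : forall a b, connect (undirRel Tp) a b.
Proof.
have sym : symmetric (undirRel Tp).
  move=> a b; rewrite /undirRel; apply/idP/idP => /asboolP H; apply/asboolP; tauto.
have n0 : (0 < n)%N by lia.
pose x0 : 'I_n := Ordinal n0.
have c0 : forall (i : nat) (hi : (i < n)%N), connect (undirRel Tp) x0 (Ordinal hi).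
  elim=> [|i IH] hi.
    by have -> : Ordinal hi = x0 by apply: val_inj.
  have hi' : (i < n)%N by lia.
  apply: connect_trans (IH hi') (connect1 _).
  by rewrite /undirRel; apply/asboolP; left.
move=> a b.
have ha := c0 a (ltn_ord a); have hb := c0 b (ltn_ord b).
have ea : Ordinal (ltn_ord a) = a by apply: val_inj.
have eb : Ordinal (ltn_ord b) = b by apply: val_inj.
rewrite ea in ha; rewrite eb in hb.
apply: connect_trans _ hb; by rewrite sym_connect_sym.
Qed.

Lemma ltA (i : 'I_n.-1) : (i < n)%N. Proof. have := ltn_ord i; lia. Qed.
Lemma ltB (i : 'I_n.-1) : (i.+1 < n)%N. Proof. have := ltn_ord i; lia. Qed.
Definition fpair (i : 'I_n.-1) : 'I_n * 'I_n := (Ordinal (ltA i), Ordinal (ltB i)).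

Lemma Tp_card :
  #|[set ab : 'I_n * 'I_n | (ab.1 < ab.2)%N && undirRel Tp ab.1 ab.2]| = n.-1.
Proof.
have -> : [set ab : 'I_n * 'I_n | (ab.1 < ab.2)%N && undirRel Tp ab.1 ab.2] = fpair @: setT.
  apply/setP => [[a b]]; rewrite inE /=; apply/idP/imsetP.
  - move=> /andP[hab /asboolP]; rewrite /Tp => -[h|h]; last by lia.
    have ha : (a < n.-1)%N by have := ltn_ord b; lia.
    exists (Ordinal ha); first by rewrite inE.
    by rewrite /fpair; congr (_, _); apply: val_inj.
  - move=> [i _ E]; case: E => -> -> /=.
    by rewrite ltnSn; apply/asboolP; left.
rewrite card_imset; last first.
  by move=> i j E; apply: val_inj; move: (congr1 (fun p => val p.1) E).
apply: eq_trans _ (card_ord n.-1); apply: eq_card => x; first [by rewrite in_setT | by rewrite unfold_in /= in_setT | by rewrite unfold_in | by rewrite inE | by [] | idtac]. Show.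
Qed.

Lemma Tp_span : spanningTree Tp.
Proof. by split; [exact: Tp_conn | exact: Tp_card]. Qed.

Lemma pos_bnd (x : 'I_n) : `|(pos x).1| <= 2 /\ `|(pos x).2| <= 1.
Proof.
have ep := eps_gt0.
have hn : 0 < n%:R :> R by rewrite ltr0n; lia.
have e1 : forall y : nat, (y <= n)%N -> `|y%:R * eps| <= 1.
  move=> y hy; have h0 : 0 <= y%:R * eps by rewrite mulr_ge0 ?ler0n // ltW.
  rewrite ger0_norm // /eps -[_ * _^-1]/(_ / _) ler_pdivrMr // mul1r ler_nat //.
have hx := ltn_ord x.
rewrite /pos; case: ifP => _ /=.
  split; last by rewrite normr0.
  apply: le_trans (e1 _ (ltnW hx)) _; lra.
split; last exact: sin_max.
apply: le_trans (ler_normD _ _) _.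
have := e1 (x - mm)%N (leq_trans (leq_subr _ _) (ltnW hx)).
have := cos_max beta; lra.
Qed.

Lemma d_le6 (a b : 'I_n) : d pos a b <= 6.
Proof.
apply: le_trans (dist_le _ _) _.
have [a1 a2] := pos_bnd a; have [b1 b2] := pos_bnd b.
have := ler_normB (pos a).1 (pos b).1; have := ler_normB (pos a).2 (pos b).2.
lra.
Qed.

Lemma wt_Tp : wt pos Tp <= 7.
Proof.
have ep := eps_gt0.
have hmm := mm_gt0.
pose g (a : 'I_n) : R := if nat_of_ord a == mm.-1 then 6 else eps.
have inner : forall a : 'I_n,
    \sum_(b : 'I_n | (a < b)%N && undirRel Tp a b) d pos a b <= g a.
  move=> a.
  case h : (a.+1 < n)%N; last first.
    rewrite big_pred0; first by rewrite /g; case: ifP => _; lra.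
    move=> b /=; apply/negbTE/negP => /andP[hab /asboolP [H|H]].
      by have := ltn_ord b; rewrite /Tp in H; lia.
    by rewrite /Tp in H; lia.
  pose b0 : 'I_n := Ordinal h.
  rewrite (eq_bigl (fun b => b == b0)); last first.
    move=> b /=; apply/idP/eqP => [/andP[hab /asboolP [H|H]]|->].
    - by apply: val_inj.
    - by rewrite /Tp in H; lia.
    - by rewrite /= ltnSn; apply/asboolP; left.
  rewrite big_pred1_eq /g.
  case: eqP => ha; first exact: d_le6.
  apply: le_trans (dist_le _ _) _.
  case: (ltnP a mm) => ham.
    have hb : (b0 < mm)%N by rewrite /=; lia.
    rewrite (posA ham) (posA hb) /= -natr1 subrr normr0 addr0.
    have -> : a%:R * eps - (a%:R + 1) * eps = - eps by ring.
    by rewrite normrN gtr0_norm.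
  have hb : (mm <= b0)%N by rewrite /=; lia.
  rewrite (posB ham) (posB hb) /= subSn // -natr1 subrr normr0 addr0.
  have -> : (a - mm)%:R * eps + cos beta - (((a - mm)%:R + 1) * eps + cos beta) = - eps by ring.
  by rewrite normrN gtr0_norm.
rewrite /wt.
apply: (@le_trans _ _ (\sum_(a : 'I_n) g a)); first by apply: ler_sum => a _; exact: inner.
have hm1 : (mm.-1 < n)%N by have := nmm; lia.
pose a0 : 'I_n := Ordinal hm1.
rewrite (bigD1 a0) //= {1}/g eqxx.
rewrite (eq_bigr (fun _ => eps)); last first.
  move=> a ha; rewrite /g; case: eqP => // e.
  have ea : a = a0 by apply: val_inj.
  by rewrite ea eqxx in ha.
have S : \sum_(a : 'I_n) eps = 1.
  rewrite sumr_const card_ord -mulr_natl /eps mulfV //.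
  by rewrite pnatr_eq0; lia.
move: S; rewrite (bigD1 a0) //= => S.
lra.
Qed.


Lemma pos_inj : injective pos.
Proof.
have ep := eps_gt0; have sb := sinbeta_gt0.
move=> x y E.
have e1 := congr1 fst E; have e2 := congr1 snd E.
move: e1 e2; rewrite /pos.
case: ifP => hx; case: ifP => hy /= e1 e2.
- apply: val_inj; apply/eqP; rewrite -(eqr_nat R); apply/eqP.
  exact: (mulIf (lt0r_neq0 ep)).
- by move: sb; rewrite e2 ltxx.
- by move: sb; rewrite -e2 ltxx.
- have : (x - mm)%N = (y - mm)%N.
    apply/eqP; rewrite -(eqr_nat R); apply/eqP.
    apply: (mulIf (lt0r_neq0 ep)); exact: (addIr _ e1).
  move: hx hy => /negbT; rewrite -leqNgt => hx /negbT; rewrite -leqNgt => hy e.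
  by apply: val_inj => /=; rewrite -(subnK hx) -(subnK hy) e.
Qed.

Lemma final (r : R) : 1 < r -> injective pos /\
  forall T : 'I_n -> 'I_n -> Prop, isMST pos T ->
      sin beta / 14 * n%:R * wt pos T <= wt pos (EYY k pos) /\
      sin beta / 14 * n%:R * wt pos T <= wt pos (SinkStep k pos (EY k pos)) /\
      sin beta / 14 * n%:R * wt pos T <= wt pos (SinkStep k pos (EYE k pos r)).
Proof.
move=> hr; split; first exact: pos_inj.
move=> T [_ Tmin].
have wT : wt pos T <= 7 := le_trans (Tmin _ Tp_span) wt_Tp.
have sb := sinbeta_gt0.
have nR : n%:R = 2 * mm%:R :> R by rewrite [in LHS]nmm natrD; ring.
have M0 : 0 <= mm%:R :> R by rewrite ler0n.
have hc : sin beta / 14 * n%:R * wt pos T <= mm%:R * sin beta.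
  have c0 : 0 <= sin beta / 14 * n%:R by rewrite mulr_ge0 ?ler0n ?divr_ge0 ?ltW.
  apply: le_trans (ler_wpM2l c0 wT) _.
  rewrite nR; rewrite le_eqVlt; apply/orP; left; apply/eqP; field; rewrite ?pnatr_eq0 //; lra.
split; first exact: le_trans hc (wt_lb _ goodEYY).
split; first exact: le_trans hc (wt_lb _ goodYS).
exact: le_trans hc (wt_lb _ (fun v hv => goodYES r v hr hv)).
Qed.

End Geo.

Theorem mainTheorem7 (R : realType) (k : nat) (r : R) :
  (6 <= k)%N -> 1 < r ->
  exists c : R, 0 < c /\
  forall n : nat, ~~ odd n -> (2 <= n)%N ->
  exists p : 'I_n -> R * R, injective p /\
    forall T : 'I_n -> 'I_n -> Prop, isMST p T ->
      c * n%:R * wt p T <= wt p (EYY k p) /\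
      c * n%:R * wt p T <= wt p (SinkStep k p (EY k p)) /\
      c * n%:R * wt p T <= wt p (SinkStep k p (EYE k p r)).
Proof.
move=> k6 hr.
exists (sin (beta R k) / 14); split.
  by apply: divr_gt0; [exact: sinbeta_gt0 | by []].
move=> n nev n2.
exists (pos R k n); exact: final.
Qed.
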